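(* Let $f:[0,\infty)\to\mathbb{R}$ be differentiable, let $0<a<b<\infty$, and suppose $f'$ is Lebesgue integrable on $[a,b]$. Let $(\alpha,m)\in(0,1]^2$ and suppose $|f'|$ is $(\alpha,m)$-GA-convex on $[0,\max\{a^{1/m},b\}]$. Then \[ \biggl|\frac{b^2f(b)-a^2f(a)}{2}-\int_a^b xf(x)\,dx\biggr|\le\frac{\ln b-\ln a}{2}\Bigl\{m\bigl[L(a^3,b^3)-G(\alpha,3)\bigr]\bigl|f'(a^{1/m})\bigr|+G(\alpha,3)|f'(b)|\Bigr\}. \]
   Context: For $c>0$, $h:[0,c]\to\mathbb{R}$ and $(\alpha,m)\in(0,1]^2$, $h$ is called $(\alpha,m)$-GA-convex on $[0,c]$ if $h\bigl(x^\lambda y^{m(1-\lambda)}\bigr)\le\lambda^\alpha h(x)+m(1-\lambda^\alpha)h(y)$ for all $x,y\in[0,c]$ and all $\lambda\in[0,1]$ (with the convention $0^0=1$). For fixed $0<a<b$ and $\ell\ge0$, $\alpha>0$, set $G(\alpha,\ell)=\int_0^1 t^\alpha a^{\ell(1-t)}b^{\ell t}\,dt$. For $x,y>0$, $x\neq y$, the logarithmic mean is $L(x,y)=\frac{y-x}{\ln y-\ln x}$. *)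

(* Defs.v *)
From Stdlib Require Import Reals Lra.
Open Scope R_scope.

(* Real power on [0,oo) with the convention 0^0 = 1 and 0^y = 0 for y <> 0
   (only used with y >= 0). For x > 0 this is Rpower x y = exp (y ln x). *)
Definition rpow (x y : R) : R :=
  if Req_EM_T x 0 then (if Req_EM_T y 0 then 1 else 0) else Rpower x y.

Definition GA_convex (alpha m c : R) (h : R -> R) : Prop :=
  forall x y lam : R,
    0 <= x <= c -> 0 <= y <= c -> 0 <= lam <= 1 ->
    0 <= rpow x lam * rpow y (m * (1 - lam)) <= c ->
    h (rpow x lam * rpow y (m * (1 - lam)))
      <= rpow lam alpha * h x + m * (1 - rpow lam alpha) * h y.

(* Integrand of G(alpha, l) = int_0^1 t^alpha a^(l(1-t)) b^(l t) dt. *)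
Definition G_integrand (a b alpha l : R) (t : R) : R :=
  rpow t alpha * Rpower a (l * (1 - t)) * Rpower b (l * t).

Definition logmean (x y : R) : R := (y - x) / (ln y - ln x).

Definition right_deriv (f : R -> R) (x l : R) : Prop :=
  forall eps : R, 0 < eps -> exists delta : R, 0 < delta /\
    forall h : R, 0 < h < delta -> Rabs ((f (x + h) - f x) / h - l) < eps.

(* Main.v *)
Require Import Defs.
From Stdlib Require Import Reals Lra.
From Coquelicot Require Import Coquelicot.
Open Scope R_scope.

Lemma cont_of_pt f x : continuity_pt f x -> continuous f x.
Proof. intro H; now apply continuity_pt_filterlim. Qed.

Lemma rpow_pos x y : 0 < x -> rpow x y = exp (y * ln x).
Proof. intro H; unfold rpow; destruct (Req_EM_T x 0); [lra|reflexivity]. Qed.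

Lemma rpow0 y : y <> 0 -> rpow 0 y = 0.
Proof. intro H; unfold rpow; destruct (Req_EM_T 0 0); [|lra]. destruct (Req_EM_T y 0); [lra|reflexivity]. Qed.

Lemma r_cont alpha (Ha : 0 < alpha) t :
  continuity_pt (fun s => rpow (Rmax 0 s) alpha) t.
Proof.
  destruct (Rtotal_order t 0) as [Hlt|[Heq|Hgt]].
  - apply continuity_pt_locally_ext with (a := - t) (f := fun _ => 0).
    + lra.
    + intros y Hy. unfold Rdist in Hy. apply Rabs_def2 in Hy.
      rewrite Rmax_left by lra. rewrite rpow0; lra.
    + apply continuity_pt_const. intros u v; reflexivity.
  - subst t. intros eps Heps.
    exists (exp (ln eps / alpha)). split; [apply exp_pos|].
    intros x [_ Hx]. unfold R_dist in *. simpl in *.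
    rewrite (Rmax_left 0 0) by lra. rewrite (rpow0 alpha) by lra.
    unfold Rdist in *; rewrite Rminus_0_r in *.
    destruct (Rle_dec x 0) as [Hx0|Hx0].
    + rewrite Rmax_left by lra. rewrite rpow0 by lra. rewrite Rabs_R0; lra.
    + rewrite Rmax_right by lra. rewrite rpow_pos by lra.
      rewrite Rabs_right by (left; apply exp_pos).
      rewrite Rabs_right in Hx by lra.
      assert (Hl : ln x < ln eps / alpha).
      { rewrite <- (ln_exp (ln eps / alpha)). apply ln_increasing; lra. }
      replace eps with (exp (alpha * (ln eps / alpha))).
      * apply exp_increasing. apply Rmult_lt_compat_l; lra.
      * replace (alpha * (ln eps / alpha)) with (ln eps) by (field; lra).
        apply exp_ln; lra.
  - apply continuity_pt_locally_ext with (a := t) (f := fun s => exp (alpha * ln s)).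
    + lra.
    + intros y Hy. unfold Rdist in Hy. apply Rabs_def2 in Hy.
      rewrite Rmax_right by lra. rewrite rpow_pos; [reflexivity|lra].
    + apply derivable_continuous_pt.
      apply (derivable_pt_comp (fun s => alpha * ln s) exp).
      * apply derivable_pt_mult. apply derivable_pt_const.
        exists (/ t). apply derivable_pt_lim_ln; lra.
      * apply derivable_pt_exp.
Qed.

Lemma pt_of_cont f x : continuous f x -> continuity_pt f x.
Proof. intro H; now apply continuity_pt_filterlim. Qed.

Lemma exR (f : R -> R) c d :
  (forall z, Rmin c d <= z <= Rmax c d -> continuity_pt f z) -> ex_RInt f c d.
Proof.
  intro H. apply (ex_RInt_continuous (V:=R_CompleteNormedModule)).
  intros z Hz. apply cont_of_pt, H, Hz.
Qed.

Lemma cm f g x : continuity_pt f x -> continuity_pt g x -> continuity_pt (fun t => f t * g t) x.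
Proof. intros; now apply continuity_pt_mult. Qed.
Lemma cp f g x : continuity_pt f x -> continuity_pt g x -> continuity_pt (fun t => f t + g t) x.
Proof. intros; now apply continuity_pt_plus. Qed.
Lemma cmi f g x : continuity_pt f x -> continuity_pt g x -> continuity_pt (fun t => f t - g t) x.
Proof. intros; now apply continuity_pt_minus. Qed.
Lemma cc (c x : R) : continuity_pt (fun _ => c) x.
Proof. apply continuity_pt_const. intros u v; reflexivity. Qed.
Lemma cpw f n x : continuity_pt f x -> continuity_pt (fun t => f t ^ n) x.
Proof. intros H. apply (continuity_pt_comp f (fun y => y ^ n)); [exact H|].
  apply derivable_continuous_pt, derivable_pt_pow. Qed.

Theorem corollary3p1
  (f df : R -> R) (a b alpha m : R)
  (Hdiff : forall x : R, 0 < x -> derivable_pt_lim f x (df x))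
  (Hdiff0 : right_deriv f 0 (df 0))
  (Hab : 0 < a < b)
  (Halpha : 0 < alpha <= 1) (Hm : 0 < m <= 1)
  (Hconv : GA_convex alpha m (Rmax (Rpower a (1 / m)) b) (fun x => Rabs (df x)))
  (prI : Riemann_integrable (fun x => x * f x) a b)
  (prG : Riemann_integrable (G_integrand a b alpha 3) 0 1) :
  Rabs ((b ^ 2 * f b - a ^ 2 * f a) / 2 - RiemannInt prI)
    <= (ln b - ln a) / 2 *
       (m * (logmean (a ^ 3) (b ^ 3) - RiemannInt prG) * Rabs (df (Rpower a (1 / m)))
        + RiemannInt prG * Rabs (df b)).
Proof.
  set (L := ln b - ln a).
  assert (HL : 0 < L).
  { unfold L. assert (ln a < ln b) by (apply ln_increasing; lra). lra. }
  set (X := fun t => exp (ln a + t * L)).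
  assert (HXpos : forall t, 0 < X t) by (intro; apply exp_pos).
  assert (dX : forall t, is_derive X t (L * X t)).
  { intro t. unfold X. auto_derive; [exact I|]. ring. }
  assert (cX : forall t, continuity_pt X t).
  { intro t. apply pt_of_cont. apply (ex_derive_continuous (K:=R_AbsRing) (V:=R_NormedModule) X t). exists (L * X t). apply dX. }
  set (g := fun s => s * f s).
  assert (cg : forall s, 0 < s -> continuity_pt g s).
  { intros s Hs. unfold g. apply (continuity_pt_mult (fun s => s) f).
    - apply derivable_continuous_pt. apply derivable_pt_id.
    - apply derivable_continuous_pt. exists (df s). apply Hdiff; exact Hs. }
  assert (exg : forall c d, 0 < c -> 0 < d -> ex_RInt g c d).
  { intros c d Hc Hd. apply exR. intros z [Hz _].
    apply cg. apply Rlt_le_trans with (2 := Hz).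
    apply Rmin_glb_lt; assumption. }
  set (P := fun y => RInt g a y).
  assert (dP : forall x, 0 < x -> is_derive P x (g x)).
  { intros x Hx. apply (is_derive_RInt g P a x).
    - assert (Hx2 : 0 < x / 2) by lra.
      exists (mkposreal _ Hx2). intros y Hy.
      change (Rabs (y - x) < x / 2) in Hy. apply Rabs_def2 in Hy.
      apply (RInt_correct (V:=R_CompleteNormedModule)). apply exg; lra.
    - apply cont_of_pt, cg, Hx. }
  set (F := fun x => x ^ 2 / 2 * f x - P x).
  assert (dF : forall x, 0 < x -> is_derive F x (x ^ 2 / 2 * df x)).
  { intros x Hx.
    assert (h1 : is_derive (fun x => x ^ 2 / 2) x x).
    { auto_derive; [exact I|]. field. }
    assert (h2 : is_derive f x (df x)) by (apply is_derive_Reals, Hdiff, Hx).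
    pose proof (is_derive_mult _ _ x _ _ h1 h2 (fun n m => Rmult_comm n m)) as h3.
    pose proof (is_derive_minus _ _ x _ _ h3 (dP x Hx)) as h4.
    replace (x ^ 2 / 2 * df x) with
      (minus (plus (mult x (f x)) (mult (x ^ 2 / 2) (df x))) (g x)).
    - exact h4.
    - unfold minus, plus, mult, opp, g; simpl. ring. }
  set (H := fun t => F (X t)).
  assert (dH : forall t, is_derive H t (L * X t * (X t ^ 2 / 2 * df (X t)))).
  { intro t. exact (is_derive_comp F X t _ _ (dF (X t) (HXpos t)) (dX t)). }
  set (A := Rpower a (1 / m)).
  set (r := fun s => rpow (Rmax 0 s) alpha).
  set (B := fun t => L / 2 * (X t ^ 3 * (r t * Rabs (df b) + m * (1 - r t) * Rabs (df A)))).
  assert (cB : forall t, continuity_pt B t).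
  { intro t. unfold B.
    pose proof (r_cont alpha (proj1 Halpha) t) as hr. fold r in hr.
    repeat first [ apply cm | apply cmi | apply cp | apply cpw | apply cc | apply cX | exact hr ]. }
  assert (exB : forall c d, ex_RInt B c d).
  { intros c d. apply exR. intros z _. apply cB. }
  set (K := fun t => RInt B 0 t).
  assert (dK : forall t, is_derive K t (B t)).
  { intro t. apply (is_derive_RInt B K 0 t).
    - apply filter_forall. intro y.
      apply (RInt_correct (V:=R_CompleteNormedModule)). apply exB.
    - apply cont_of_pt, cB. }
  assert (HA : 0 < A) by (unfold A, Rpower; apply exp_pos).
  assert (bound : forall t, 0 <= t <= 1 ->
     - B t <= L * X t * (X t ^ 2 / 2 * df (X t)) <= B t).
  { intros t Ht.
    assert (Xb : X t <= b).
    { unfold X. rewrite <- (exp_ln b) by lra.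
      assert (Hle : ln a + t * L <= ln b) by (unfold L in *; nra).
      destruct (Rle_lt_or_eq_dec _ _ Hle) as [Hl|Hl].
      - left; apply exp_increasing, Hl.
      - right; rewrite Hl; reflexivity. }
    assert (Heq : rpow b t * rpow A (m * (1 - t)) = X t).
    { rewrite !rpow_pos by lra. unfold A, Rpower. rewrite ln_exp.
      rewrite <- exp_plus. unfold X. f_equal. unfold L. field. lra. }
    pose proof (Hconv b A t) as conv. rewrite Heq in conv.
    assert (Hr : r t = rpow t alpha).
    { unfold r. rewrite Rmax_right by lra. reflexivity. }
    assert (HXA : A <= Rmax A b) by apply Rmax_l.
    assert (HXB : b <= Rmax A b) by apply Rmax_r.
    fold A in conv.
    specialize (conv ltac:(split; lra) ltac:(split; lra) Ht ltac:(pose proof (HXpos t); split; lra)).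
    simpl in conv. rewrite <- Hr in conv.
    apply Rabs_le_between in conv.
    unfold B; cbv beta.
    assert (Hk : 0 <= L / 2 * X t ^ 3).
    { pose proof (HXpos t). apply Rmult_le_pos; [lra|]. apply pow_le; lra. }
    assert (E1 : L * X t * (X t ^ 2 / 2 * df (X t)) = (L / 2 * X t ^ 3) * df (X t)).
    { field. }
    rewrite E1.
    set (U := r t * Rabs (df b) + m * (1 - r t) * Rabs (df A)) in *.
    replace (L / 2 * (X t ^ 3 * U)) with ((L / 2 * X t ^ 3) * U) by field.
    split; nra. }
  assert (mvt : forall s, (s = 1 \/ s = -1) -> s * (H 1 - H 0) <= K 1 - K 0).
  { intros s Hs.
    set (dPhi := fun t => s * (L * X t * (X t ^ 2 / 2 * df (X t))) - B t).
    assert (dP2 : forall x, is_derive (fun t => s * H t - K t) x (dPhi x)).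
    { intro x. unfold dPhi.
      apply (is_derive_minus (fun t => s * H t) K).
      - apply is_derive_scal, dH.
      - apply dK. }
    destruct (MVT_gen (fun t => s * H t - K t) 0 1 dPhi) as [c [Hc Heq]].
    - intros x _. apply dP2.
    - intros x _. apply pt_of_cont.
      apply (ex_derive_continuous (K:=R_AbsRing) (V:=R_NormedModule)).
      eexists; apply dP2.
    - rewrite Rmin_left, Rmax_right in Hc by lra.
      pose proof (bound c Hc) as Hb. unfold dPhi in Heq.
      destruct Hs; subst s; nra. }
  assert (K0 : K 0 = 0) by (unfold K; rewrite RInt_point; reflexivity).
  assert (X1 : X 1 = b).
  { unfold X. replace (ln a + 1 * L) with (ln b) by (unfold L; ring). apply exp_ln; lra. }
  assert (X0 : X 0 = a).
  { unfold X. replace (ln a + 0 * L) with (ln a) by ring. apply exp_ln; lra. }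
  assert (H1 : H 1 = b ^ 2 / 2 * f b - RiemannInt prI).
  { unfold H, F, P. rewrite X1. unfold g. rewrite RInt_Reals with (pr := prI). reflexivity. }
  assert (H0 : H 0 = a ^ 2 / 2 * f a).
  { unfold H, F, P. rewrite X0. rewrite RInt_point. simpl. unfold zero; simpl. ring. }
  assert (crX : forall t, continuity_pt (fun t => r t * X t ^ 3) t).
  { intro t. pose proof (r_cont alpha (proj1 Halpha) t) as hr. fold r in hr.
    apply cm; [exact hr|]. apply cpw, cX. }
  assert (IG : is_RInt (fun t => r t * X t ^ 3) 0 1 (RiemannInt prG)).
  { rewrite <- (RInt_Reals _ _ _ prG).
    assert (E : RInt (fun t => r t * X t ^ 3) 0 1 = RInt (G_integrand a b alpha 3) 0 1).
    { apply RInt_ext. intros x Hx. rewrite Rmin_left, Rmax_right in Hx by lra.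
      unfold r, G_integrand. rewrite Rmax_right by lra.
      rewrite Rmult_assoc. f_equal. unfold X, Rpower. simpl.
      rewrite Rmult_1_r, <- !exp_plus. f_equal. unfold L. ring. }
    rewrite <- E. apply (RInt_correct (V:=R_CompleteNormedModule)).
    apply exR. intros z _. apply crX. }
  assert (IX : is_RInt (fun t => X t ^ 3) 0 1 ((b ^ 3 - a ^ 3) / (3 * L))).
  { assert (D : is_RInt (fun t => X t ^ 3) 0 1
                 (minus (X 1 ^ 3 / (3 * L)) (X 0 ^ 3 / (3 * L)))).
    { apply (is_RInt_derive (fun t => X t ^ 3 / (3 * L))).
      - intros x _. unfold X. auto_derive; [exact I|]. field. lra.
      - intros x _. apply cont_of_pt, cpw, cX. }
    rewrite X1, X0 in D. unfold minus, plus, opp in D; simpl in D.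
    replace ((b ^ 3 - a ^ 3) / (3 * L)) with
      (b * (b * (b * 1)) / (3 * L) + - (a * (a * (a * 1)) / (3 * L))) by (field; lra).
    exact D. }
  set (c1 := L / 2 * (Rabs (df b) - m * Rabs (df A))).
  set (c2 := L / 2 * (m * Rabs (df A))).
  assert (IB : is_RInt B 0 1 (c1 * RiemannInt prG + c2 * ((b ^ 3 - a ^ 3) / (3 * L)))).
  { pose proof (is_RInt_plus _ _ 0 1 _ _ (is_RInt_scal _ 0 1 c1 _ IG) (is_RInt_scal _ 0 1 c2 _ IX)) as IP.
    apply (is_RInt_ext _ B) in IP.
    - exact IP.
    - intros x _. unfold B, c1, c2, plus, scal; simpl. unfold mult; simpl. field. }
  assert (K1 : K 1 = c1 * RiemannInt prG + c2 * ((b ^ 3 - a ^ 3) / (3 * L))).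
  { unfold K. apply is_RInt_unique, IB. }
  assert (LM : logmean (a ^ 3) (b ^ 3) = (b ^ 3 - a ^ 3) / (3 * L)).
  { unfold logmean. rewrite !ln_pow by lra.
    replace (INR 3) with 3 by (simpl; ring).
    replace (3 * ln b - 3 * ln a) with (3 * L) by (unfold L; ring). reflexivity. }
  rewrite LM.
  replace ((b ^ 2 * f b - a ^ 2 * f a) / 2 - RiemannInt prI) with (H 1 - H 0)
    by (rewrite H1, H0; field).
  pose proof (mvt 1 (or_introl eq_refl)) as M1.
  pose proof (mvt (-1) (or_intror eq_refl)) as M2.
  rewrite K0, K1 in M1, M2.
  replace (L / 2 * (m * ((b ^ 3 - a ^ 3) / (3 * L) - RiemannInt prG) * Rabs (df A) +
      RiemannInt prG * Rabs (df b))) with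
    (c1 * RiemannInt prG + c2 * ((b ^ 3 - a ^ 3) / (3 * L))) by (unfold c1, c2; field; lra).
  apply Rabs_le_between. rewrite H1, H0 in M1, M2. unfold g in *.
  assert (EE : (b ^ 2 * f b - a ^ 2 * f a) / 2 - RiemannInt prI = b ^ 2 / 2 * f b - RiemannInt prI - a ^ 2 / 2 * f a) by field.
  rewrite EE. lra.
Qed.
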